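(* For all $k\in\mathbb{N}$, the vector $c^{(k)}\in\mathbb{R}^{2^k-1}$ satisfies $\sum_{j} c^{(k)}_j=2(\rho^k-1)$ and $c^{(k)}\ge\pi^{(k)}$ entrywise.
   Context: $\rho=1+\sqrt{2}$. The silver stepsizes are $\alpha_t=\rho^{\nu(t+1)-1}+1$ for $t\ge0$, where $\nu(i)$ is the largest integer $j$ with $2^j\mid i$. For $k\in\mathbb{N}$ and $n=2^k-1$, $\pi^{(k)}=[\alpha_0,\dots,\alpha_{n-1}]\in\mathbb{R}^n$ (so $\pi^{(k+1)}=[\pi^{(k)},\rho^{k-1}+1,\pi^{(k)}]$ and $\sum\pi^{(k)}=\rho^k-1$). The sequence $c^{(k)}\in\mathbb{R}^n$ is defined recursively by $c^{(1)}=[2(\rho-1)]$ and $c^{(k+1)}=\big[\pi^{(k)},\ (1+\rho^{-k})(\rho^{k-1}+1),\ \rho c^{(k)}-(\rho-1-\rho^{-k})\pi^{(k)}\big]$ (concatenation). *)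

(* Defs.v *)
From HB Require Import structures.
From mathcomp Require Import all_boot all_order all_algebra.
From mathcomp Require Import reals.
Set Implicit Arguments. Unset Strict Implicit. Unset Printing Implicit Defensive.
Import Order.TTheory GRing.Theory Num.Theory.
Local Open Scope ring_scope.

Section Silver.
Variable R : realType.

Definition rho : R := 1 + Num.sqrt 2.

Definition nu (i : nat) : nat := logn 2 i.

Definition alpha (t : nat) : R := rho ^ ((nu t.+1)%:Z - 1) + 1.

Definition pi_seq (k : nat) : seq R := [seq alpha t | t <- iota 0 (2 ^ k - 1)].

(* c^(1) = [2(rho-1)],
   c^(k+1) = [pi^(k), (1+rho^-k)(rho^(k-1)+1), rho c^(k) - (rho-1-rho^-k) pi^(k)].
   c 0 is a junk value (c^(0) is not defined in the paper). *)
Fixpoint c_seq (k : nat) : seq R :=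
  match k with
  | 0 => [::]
  | k'.+1 =>
    if k' == 0%N then [:: 2 * (rho - 1)]
    else pi_seq k' ++ (1 + rho ^- k') * (rho ^+ k'.-1 + 1)
           :: [seq rho * xy.1 - (rho - 1 - rho ^- k') * xy.2
              | xy <- zip (c_seq k') (pi_seq k')]
  end.

End Silver.

(* Main.v *)
Require Import Defs.
From HB Require Import structures.
From mathcomp Require Import all_boot all_order all_algebra.
From mathcomp Require Import reals.
From mathcomp Require Import ring lra zify.
Import Order.TTheory GRing.Theory Num.Theory.
Local Open Scope ring_scope.

Lemma logn2_shift k m : (0 < m)%N -> (m < 2 ^ k)%N -> logn 2 (2 ^ k + m) = logn 2 m.
Proof.
move=> m0 mk.
set j := logn 2 m.
have dj : (2 ^ j %| m)%N by apply: pfactor_dvdnn.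
have jk : (j < k)%N.
  have := dvdn_leq m0 dj => h.
  by rewrite -(ltn_exp2l _ _ (isT : (1 < 2)%N)); apply: leq_ltn_trans mk.
have pos : (0 < 2 ^ k + m)%N by rewrite addn_gt0 m0 orbT.
apply/eqP; rewrite eqn_leq; apply/andP; split.
  rewrite leqNgt -(pfactor_dvdn _ _ pos) //.
  rewrite dvdn_addr; last by rewrite dvdn_exp2l.
  by rewrite (pfactor_dvdn _ _ m0) // ltnn.
rewrite -(pfactor_dvdn _ _ pos) // dvdn_addr //.
by rewrite dvdn_exp2l // ltnW.
Qed.

Section S.
Variable R : realType.
Local Notation r := (rho R).

Lemma rho_gt0 : 0 < r.
Proof. by rewrite /rho ltr_pwDl ?sqrtr_ge0. Qed.

Lemma rho_ge2 : 2 <= r.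
Proof.
rewrite /rho -[2 in X in X <= _]/(1 + 1) lerD2l.
by rewrite -[X in X <= _]sqrtr1 ler_sqrt //; lra.
Qed.

Lemma rho_sq : r * r = 2 * r + 1.
Proof.
have h := sqr_sqrtr (ler0n R 2).
rewrite /rho; rewrite expr2 in h.
by rewrite mulrDl !mulrDr h; ring.
Qed.

Lemma rho_inv : r^-1 = r - 2.
Proof.
have r0 : r != 0 by rewrite gt_eqF // rho_gt0.
apply: (mulfI r0); rewrite mulfV //.
by rewrite mulrBr rho_sq; ring.
Qed.

Lemma rhoz_pred (k : nat) : r ^ (k%:Z - 1) = r ^+ k * (r - 2).
Proof.
have r0 : r != 0 by rewrite gt_eqF // rho_gt0.
by rewrite expfzDr // exprN1 rho_inv.
Qed.

Lemma pi_rec k : pi_seq R k.+1 =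
  pi_seq R k ++ (r ^+ k * (r - 2) + 1) :: pi_seq R k.
Proof.
rewrite /pi_seq.
have e : (2 ^ k.+1 - 1 = (2 ^ k - 1) + 1 + (2 ^ k - 1))%N.
  have := expn_gt0 2 k; rewrite expnS; lia.
rewrite e !iotaD !map_cat -catA; congr (_ ++ _).
have p0 : (0 < 2 ^ k)%N by rewrite expn_gt0.
rewrite !add0n subnK // /=.
rewrite {1}/alpha /nu.
have -> : ((2 ^ k - 1).+1 = 2 ^ k)%N by rewrite subn1 prednK.
rewrite pfactorK // rhoz_pred; congr (_ :: _).
rewrite -{1}[(2 ^ k)%N]addn0 iotaDl -map_comp; apply/eq_in_map => t.
rewrite mem_iota add0n /= => ht.
rewrite /alpha /nu -addnS logn2_shift //.
by move: ht p0; lia.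
Qed.

Lemma size_pi k : size (pi_seq R k) = (2 ^ k - 1)%N.
Proof. by rewrite size_map size_iota. Qed.

Lemma sum_pi k : \sum_(x <- pi_seq R k) x = r ^+ k - 1.
Proof.
elim: k => [|k IH]; first by rewrite /pi_seq /= big_nil expr0 subrr.
rewrite pi_rec big_cat big_cons IH exprS /=; ring.
Qed.

Lemma pi_pos k x : x \in pi_seq R k -> 0 < x.
Proof.
case/mapP => t _ ->; rewrite /alpha.
have := exprz_gt0 ((nu t.+1)%:Z - 1) rho_gt0; lra.
Qed.

Lemma nth_pi_ge0 k j : 0 <= nth 0 (pi_seq R k) j.
Proof.
have [h|h] := ltnP j (size (pi_seq R k)).
  by apply/ltW/(@pi_pos k (nth 0 (pi_seq R k) j)); rewrite mem_nth.
by rewrite nth_default.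
Qed.

Lemma c_rec k : c_seq R k.+2 = pi_seq R k.+1 ++ (1 + r ^- k.+1) * (r ^+ k + 1)
  :: [seq r * xy.1 - (r - 1 - r ^- k.+1) * xy.2 | xy <- zip (c_seq R k.+1) (pi_seq R k.+1)].
Proof. by []. Qed.

Lemma main k :
  size (c_seq R k.+1) = (2 ^ k.+1 - 1)%N /\
  \sum_(x <- c_seq R k.+1) x = 2 * (r ^+ k.+1 - 1) /\
  (forall j : nat, (j < 2 ^ k.+1 - 1)%N ->
     nth 0 (pi_seq R k.+1) j <= nth 0 (c_seq R k.+1) j).
Proof.
have r2 := rho_ge2.
elim: k => [|k [IHs [IHsum IHle]]].
  rewrite /= expr1 big_cons big_nil addr0; split => //; split => //.
  case=> // _; rewrite pi_rec /= expr0 mul1r; lra.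
set n := (2 ^ k.+1 - 1)%N.
have sp : size (pi_seq R k.+1) = n by rewrite size_pi.
have e : (2 ^ k.+2 - 1 = n + 1 + n)%N.
  rewrite /n expnS; have := expn_gt0 2 k.+1; rewrite expnS; lia.
have szip : size (zip (c_seq R k.+1) (pi_seq R k.+1)) = n by rewrite size_zip IHs sp minnn.
have sc : size (c_seq R k.+2) = (2 ^ k.+2 - 1)%N.
  by rewrite e c_rec size_cat /= size_map szip sp addn1 -addSnnS.
set x := r ^+ k.+1.
set y := r ^- k.+1.
have xy : x * y = 1 by rewrite mulfV // expf_neq0 // gt_eqF // rho_gt0.
have y0 : 0 < y by rewrite invr_gt0 exprn_gt0 // rho_gt0.
have hx : r ^+ k = x * (r - 2).
  by rewrite /x exprS -rho_inv mulrAC mulfV ?mul1r // gt_eqF // rho_gt0.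
split => //; split.
  rewrite c_rec big_cat big_cons sum_pi big_map /= -/x -/y.
  rewrite big_split /= sumrN -mulr_sumr -mulr_sumr.
  have -> : \sum_(i <- zip (c_seq R k.+1) (pi_seq R k.+1)) i.1 = \sum_(i <- c_seq R k.+1) i.
    by rewrite -{2}(@unzip1_zip _ _ (c_seq R k.+1) (pi_seq R k.+1)) ?big_map // IHs sp.
  have -> : \sum_(i <- zip (c_seq R k.+1) (pi_seq R k.+1)) i.2 = \sum_(i <- pi_seq R k.+1) i.
    by rewrite -{2}(@unzip2_zip _ _ (c_seq R k.+1) (pi_seq R k.+1)) ?big_map // IHs sp.
  rewrite IHsum sum_pi -/x hx [r ^+ k.+2]exprS -/x.
  nra.
move=> j; rewrite e => hj.
rewrite c_rec -/y pi_rec !nth_cat sp.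
case: ltnP => // hjn.
case ej: (j - n)%N => [|i] /=.
  rewrite -/x hx.
  have h0 : 0 <= x * (r - 2) + 1.
    by apply: addr_ge0 => //; apply: mulr_ge0; [apply/ltW/exprn_gt0/rho_gt0|lra].
  nra.
have hi : (i < n)%N by move: hj hjn ej; lia.
rewrite (nth_map (0, 0)) ?szip // nth_zip ?IHs ?sp //=.
have := IHle i; rewrite -/n => /(_ hi) hle.
have p0 := nth_pi_ge0 k.+1 i.
set p := nth 0 (pi_seq R k.+1) i in hle p0 *.
set c := nth 0 (c_seq R k.+1) i in hle *.
nra.
Qed.

End S.

Theorem lemma8 (R : realType) (k : nat) (hk : (1 <= k)%N) :
  size (c_seq R k) = (2 ^ k - 1)%N /\
  \sum_(x <- c_seq R k) x = 2 * (rho R ^+ k - 1) /\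
  (forall j : nat, (j < 2 ^ k - 1)%N ->
     nth 0 (pi_seq R k) j <= nth 0 (c_seq R k) j).
Proof.
case: k hk => // k _; exact: main.
Qed.
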